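(* For $i=1,\dots,n$ let $X_i$ be a finite set with $|X_i|=m_i$, and let $P_i$ be an irreducible stochastic matrix on $X_i$ in detailed balance with a strictly positive probability measure $\sigma_i$. Let $\{1,\dots,n\}=C\sqcup N$ be a partition with $N\ne\emptyset$, $i_1=\min N$, let $p^0_1,\dots,p^0_n>0$ sum to $1$, and assume $P_k$ is symmetric for every $k>i_1$. Let $P$ be the first crested product (see context), acting on $L(X_1\times\cdots\times X_n)\cong L(X_1)\otimes\cdots\otimes L(X_n)$. For each $i$ let $L(X_i)=\bigoplus_{j=0}^{r_i}V^i_j$ be the decomposition into eigenspaces of $P_i$, where $V^i_j$ has eigenvalue $\lambda^i_j$, $\lambda^i_0=1$ and $V^i_0$ is the space of constant functions. Then: (a) for each $k\in\{i_1+1,\dots,n\}$, each $j_k\in\{1,\dots,r_k\}$ and each choice of $j_i\in\{0,\dots,r_i\}$ for $i\in C$, $i<k$, every function in $$W^1\otimes\cdots\otimes W^{k-1}\otimes V^k_{j_k}\otimes V^{k+1}_0\otimes\cdots\otimes V^n_0,\qquad W^i=\begin{cases}L(X_i),& i\in N,\\ V^i_{j_i},& i\in C,\end{cases}$$ is an eigenvector of $P$ with eigenvalue $\sum_{i\in C,\,i<k}p^0_i\lambda^i_{j_i}+p^0_k\lambda^k_{j_k}+\sum_{i>k}p^0_i$; (b) for each choice of $j_t\in\{0,\dots,r_t\}$, $t=1,\dots,i_1$, every function in $V^1_{j_1}\otimes\cdots\otimes V^{i_1}_{j_{i_1}}\otimes V^{i_1+1}_0\otimes\cdots\otimes V^n_0$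 is an eigenvector of $P$ with eigenvalue $\sum_{i=1}^{i_1}p^0_i\lambda^i_{j_i}+\sum_{i=i_1+1}^np^0_i$; and $L(X_1\times\cdots\times X_n)$ is the direct sum of all the subspaces listed in (a) and (b).
   Context: The first crested product is the stochastic matrix $$P=\sum_{i\in C}p^0_i\,(I_1\otimes\cdots\otimes I_{i-1}\otimes P_i\otimes I_{i+1}\otimes\cdots\otimes I_n)+\sum_{i\in N}p^0_i\,(I_1\otimes\cdots\otimes I_{i-1}\otimes P_i\otimes J_{i+1}\otimes\cdots\otimes J_n),$$ where $I_i$ is the identity on $X_i$ and $J_i$ the $m_i\times m_i$ matrix with all entries $1/m_i$; i.e. $p(x,y)=\sum_{i\in C}p^0_i(\prod_{j\ne i}\delta(x_j,y_j))p_i(x_i,y_i)+\sum_{i\in N}p^0_i(\prod_{j<i}\delta(x_j,y_j))p_i(x_i,y_i)/\prod_{j>i}m_j$. It acts on functions by $(Pf)(x)=\sum_y p(x,y)f(y)$. $L(Z)$ denotes the space of complex functions on $Z$, and $(f_1\otimes\cdots\otimes f_n)(x_1,\dots,x_n)=f_1(x_1)\cdots f_n(x_n)$. Detailed balance: $\sigma_i(x)p_i(x,y)=\sigma_i(y)p_i(y,x)$. *)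

(* Defs.v *)
(* Scalars: an arbitrary numClosedFieldType C (e.g. algC or
   complex R); "0 <= x" in C forces x to be real nonnegative. *)
From HB Require Import structures.
From mathcomp Require Import all_boot all_order all_algebra.
Set Implicit Arguments. Unset Strict Implicit. Unset Printing Implicit Defensive.
Import Order.TTheory GRing.Theory Num.Theory.
Local Open Scope ring_scope.

Section CrestedDefs.
Variable C : numClosedFieldType.

Definition stochastic (m : nat) (P : 'M[C]_m) : Prop :=
  (forall x y, 0 <= P x y) /\ (forall x, \sum_y P x y = 1).

Definition irreducible (m : nat) (P : 'M[C]_m) : Prop :=
  forall x y : 'I_m, exists k : nat, 0 < (P ^+ k) x y.

Definition strictly_positive_prob (m : nat) (s : 'I_m -> C) : Prop :=
  (forall x, 0 < s x) /\ \sum_x s x = 1.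

Definition detailed_balance (m : nat) (P : 'M[C]_m) (s : 'I_m -> C) : Prop :=
  forall x y, s x * P x y = s y * P y x.

Definition mx_act (m : nat) (P : 'M[C]_m) (f : {ffun 'I_m -> C}) : {ffun 'I_m -> C} :=
  [ffun x => \sum_y P x y * f y].

Definition fscale (T : finType) (mu : C) (f : {ffun T -> C}) : {ffun T -> C} :=
  [ffun x => mu * f x].

Definition is_eigenvalue (m : nat) (P : 'M[C]_m) (mu : C) : Prop :=
  exists f : {ffun 'I_m -> C}, f != 0 /\ mx_act P f = fscale mu f.

Definition eigsp (m : nat) (P : 'M[C]_m) (mu : C) : {ffun 'I_m -> C} -> Prop :=
  fun f => mx_act P f = fscale mu f.

Variables (n : nat) (m : 'I_n -> nat).

Definition prodT := {dffun forall i : 'I_n, 'I_(m i)}.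

(* first crested product kernel p(x,y); C-part indexed by inC, N = complement *)
Definition crested (inC : pred 'I_n) (p0 : 'I_n -> C)
    (P : forall i : 'I_n, 'M[C]_(m i)) (x y : prodT) : C :=
  \sum_(i : 'I_n | inC i) p0 i * (\prod_(j : 'I_n | j != i) ((x j == y j)%:R : C)) * P i (x i) (y i)
  + \sum_(i | ~~ inC i) p0 i * (\prod_(j : 'I_n | (j < i)%N) ((x j == y j)%:R : C))
                        * P i (x i) (y i) / (\prod_(j : 'I_n | (i < j)%N) ((m j)%:R : C)).

Definition crested_act (inC : pred 'I_n) (p0 : 'I_n -> C)
    (P : forall i : 'I_n, 'M[C]_(m i)) (f : {ffun prodT -> C}) : {ffun prodT -> C} :=
  [ffun x : prodT => \sum_(y : prodT) crested inC p0 P x y * f y].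

Definition tensor (g : forall i : 'I_n, {ffun 'I_(m i) -> C}) : {ffun prodT -> C} :=
  [ffun x : prodT => \prod_i g i (x i)].

(* W^1 (x) ... (x) W^n inside L(X_1 x ... x X_n): the span of the elementary
   tensors g_1 (x) ... (x) g_n with g_i in W^i (finite sums suffice since each
   W^i is a subspace, so scalars can be absorbed in a factor). *)
Definition tensp (W : forall i : 'I_n, {ffun 'I_(m i) -> C} -> Prop) :
    {ffun prodT -> C} -> Prop :=
  fun f => exists (k : nat) (g : 'I_k -> forall i : 'I_n, {ffun 'I_(m i) -> C}),
    (forall l i, W i (g l i)) /\ f = \sum_l tensor (g l).

End CrestedDefs.

Definition dirsum (V : zmodType) (I : finType) (Q : pred I) (S : I -> V -> Prop) : Prop :=
  (forall f : V, exists g : I -> V, (forall a, Q a -> S a (g a)) /\ f = \sum_(a | Q a) g a)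
  /\ (forall g : I -> V, (forall a, Q a -> S a (g a)) ->
        \sum_(a | Q a) g a = 0 -> forall a, Q a -> g a = 0).

Section Indices.
Variables (C : numClosedFieldType) (n : nat) (m : 'I_n -> nat) (r : 'I_n -> nat).
Variables (P : forall i : 'I_n, 'M[C]_(m i)) (lam : forall i : 'I_n, 'I_(r i).+1 -> C).
Variables (inC : pred 'I_n) (i1 : 'I_n) (p0 : 'I_n -> C).

Definition choiceT := {dffun forall i : 'I_n, 'I_(r i).+1}.

Definition Vsp (i : 'I_n) (j : 'I_(r i).+1) := eigsp (P i) (lam j).

Definition WA (k : 'I_n) (j : choiceT) (i : 'I_n) : {ffun 'I_(m i) -> C} -> Prop :=
  if (i < k)%N then (if inC i then Vsp (j i) else fun _ => True)
  else if i == k then Vsp (j i) else Vsp (ord0 : 'I_(r i).+1).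

(* indices for (a): i1 < k, j_k <> 0, and only j_i (i in C, i < k) and j_k used *)
Definition goodA (k : 'I_n) (j : choiceT) : bool :=
  [&& (i1 < k)%N, j k != ord0 &
      [forall i, (j i != ord0) ==> ((inC i && (i < k)%N) || (i == k))]].

Definition muA (k : 'I_n) (j : choiceT) : C :=
  \sum_(i : 'I_n | inC i && (i < k)%N) p0 i * lam (j i) + p0 k * lam (j k)
  + \sum_(i : 'I_n | (k < i)%N) p0 i.

Definition WB (j : choiceT) (i : 'I_n) : {ffun 'I_(m i) -> C} -> Prop :=
  if (i <= i1)%N then Vsp (j i) else Vsp (ord0 : 'I_(r i).+1).

Definition goodB (j : choiceT) : bool := [forall i, (j i != ord0) ==> (i <= i1)%N].

Definition muB (j : choiceT) : C :=
  \sum_(i : 'I_n | (i <= i1)%N) p0 i * lam (j i) + \sum_(i : 'I_n | (i1 < i)%N) p0 i.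

Definition goodAB (a : ('I_n * choiceT) + choiceT) : bool :=
  match a with inl kj => goodA kj.1 kj.2 | inr j => goodB j end.

Definition spAB (a : ('I_n * choiceT) + choiceT) : {ffun prodT m -> C} -> Prop :=
  match a with inl kj => tensp (WA kj.1 kj.2) | inr j => tensp (WB j) end.

End Indices.

(* Main.v *)
Require Import Defs.
From HB Require Import structures.
From mathcomp Require Import all_boot all_order all_algebra.
From mathcomp Require Import sesquilinear spectral.
From mathcomp Require Import ring.
From Stdlib Require Import ClassicalEpsilon.
Set Implicit Arguments. Unset Strict Implicit. Unset Printing Implicit Defensive.
Import Order.TTheory GRing.Theory Num.Theory.
Local Open Scope ring_scope.

Lemma eigsp0 (C : numClosedFieldType) m (P : 'M[C]_m) mu : eigsp P mu 0.
Proof.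
rewrite /eigsp; apply/ffunP => x; rewrite !ffunE big1 ?mulr0 // => y _.
by rewrite ffunE mulr0.
Qed.

Lemma eigspD (C : numClosedFieldType) m (P : 'M[C]_m) mu f g :
  eigsp P mu f -> eigsp P mu g -> eigsp P mu (f + g).
Proof.
rewrite /eigsp => Hf Hg; apply/ffunP => x.
move/ffunP/(_ x): Hf; move/ffunP/(_ x): Hg.
rewrite !ffunE mulrDr => <- <-; rewrite -big_split /=; apply: eq_bigr => y _.
by rewrite ffunE mulrDr.
Qed.

Lemma eigsp_sum (C : numClosedFieldType) m (P : 'M[C]_m) mu (I : finType)
    (Q : pred I) (F : I -> {ffun 'I_m -> C}) :
  (forall i, Q i -> eigsp P mu (F i)) -> eigsp P mu (\sum_(i | Q i) F i).
Proof.
move=> H; apply: (big_ind (eigsp P mu)) => //; [exact: eigsp0 | exact: eigspD].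
Qed.

Definition rv2f (C : numClosedFieldType) m (v : 'rV[C]_m) : {ffun 'I_m -> C} :=
  [ffun x => v 0 x].

Lemma rv2fD (C : numClosedFieldType) m (v w : 'rV[C]_m) :
  rv2f (v + w) = rv2f v + rv2f w.
Proof. by apply/ffunP => x; rewrite !ffunE mxE. Qed.

Lemma rv2f0 (C : numClosedFieldType) m : rv2f (0 : 'rV[C]_m) = 0.
Proof. by apply/ffunP => x; rewrite !ffunE mxE. Qed.

Lemma rv2f_sum (C : numClosedFieldType) m (I : finType) (Q : pred I)
   (F : I -> 'rV[C]_m) : rv2f (\sum_(i | Q i) F i) = \sum_(i | Q i) rv2f (F i).
Proof. exact: (big_morph _ (@rv2fD C m) (@rv2f0 C m)). Qed.

Section Factor.
Variables (C : numClosedFieldType) (m : nat) (P : 'M[C]_m) (s : 'I_m -> C).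
Hypotheses (Pst : stochastic P) (Pirr : irreducible P)
  (sp : strictly_positive_prob s) (db : detailed_balance P s).

Lemma P_ge0 x y : 0 <= P x y. Proof. by case: Pst. Qed.
Lemma P_real x y : (P x y)^* = P x y. Proof. exact: geC0_conj (P_ge0 x y). Qed.
Lemma Psum1 x : \sum_y P x y = 1. Proof. by case: Pst. Qed.
Lemma s_gt0 x : 0 < s x. Proof. by case: sp. Qed.
Lemma s_real x : (s x)^* = s x. Proof. exact: geC0_conj (ltW (s_gt0 x)). Qed.

Definition ip (f g : {ffun 'I_m -> C}) := \sum_x s x * f x * (g x)^*.

Lemma ip_adj f g : ip (mx_act P f) g = ip f (mx_act P g).
Proof.
rewrite /ip.
transitivity (\sum_x \sum_y s x * P x y * f y * (g x)^*).
  apply: eq_bigr => x _; rewrite ffunE mulr_sumr /= mulr_suml /=.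
  by apply: eq_bigr => y _; ring.
rewrite exchange_big /=; apply: eq_bigr => y _.
rewrite ffunE rmorph_sum mulr_sumr /=; apply: eq_bigr => x _.
by rewrite rmorphM /= P_real db; ring.
Qed.

Lemma ip_eq0 f : ip f f = 0 -> f = 0.
Proof.
move=> /psumr_eq0P H; apply/ffunP => x; rewrite ffunE.
have H0 : forall y, true -> 0 <= s y * f y * (f y)^*.
  move=> y _; rewrite -mulrA mulr_ge0 ?mul_conjC_ge0 //; exact: ltW (s_gt0 y).
have := H H0 x isT; rewrite -mulrA => /eqP; rewrite mulf_eq0 mul_conjC_eq0.
by rewrite gt_eqF ?s_gt0 //= => /eqP.
Qed.

Lemma ip_scalel mu f g : ip (fscale mu f) g = mu * ip f g.
Proof. rewrite /ip mulr_sumr; apply: eq_bigr => x _; rewrite ffunE. ring. Qed.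

Lemma ip_scaler mu f g : ip f (fscale mu g) = mu^* * ip f g.
Proof.
rewrite /ip mulr_sumr; apply: eq_bigr => x _; rewrite ffunE rmorphM; ring.
Qed.

Lemma eig_real mu : is_eigenvalue P mu -> mu^* = mu.
Proof.
case=> h [hn0 Ph].
have := ip_adj h h; rewrite Ph ip_scalel ip_scaler => /eqP.
rewrite -subr_eq0 -mulrBl mulf_eq0 subr_eq0 => /orP[/eqP E|/eqP E].
  by rewrite E conjCK.
by move: hn0; rewrite (ip_eq0 E) eqxx.
Qed.

Lemma eig_orth mu nu f g : is_eigenvalue P nu -> mu != nu ->
  eigsp P mu f -> eigsp P nu g -> ip f g = 0.
Proof.
move=> /eig_real nur mn Pf Pg.
have := ip_adj f g; rewrite /eigsp in Pf Pg.
rewrite Pf Pg ip_scalel ip_scaler nur => /eqP.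
rewrite -subr_eq0 -mulrBl mulf_eq0 subr_eq0 (negbTE mn) /= => /eqP //.
Qed.

Lemma sym_sum0 mu f : P^T = P -> mu != 1 -> eigsp P mu f -> \sum_x f x = 0.
Proof.
move=> Psym mu1 Pf.
have E: \sum_x mx_act P f x = \sum_x f x.
  under eq_bigr do rewrite ffunE.
  rewrite exchange_big /=; apply: eq_bigr => y _.
  rewrite -mulr_suml /=.
  have -> : \sum_x P x y = 1.
    rewrite -(Psum1 y); apply: eq_bigr => x _.
    by rewrite -{1}Psym mxE.
  by rewrite mul1r.
move: E; rewrite Pf.
under eq_bigr do rewrite ffunE.
rewrite -mulr_sumr => /eqP; rewrite -{2}[\sum_x f x]mul1r -subr_eq0 -mulrBl.
by rewrite mulf_eq0 subr_eq0 (negbTE mu1) => /eqP.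
Qed.

Lemma Pk_ge0 k x y : 0 <= (P ^+ k) x y.
Proof.
elim: k x y => [|k IH] x y; first by rewrite expr0 mxE ler0n.
rewrite exprS -mulmxE mxE; apply: sumr_ge0 => z _.
by rewrite mulr_ge0 ?P_ge0 ?IH.
Qed.

Lemma fix_const f : mx_act P f = f -> forall x y, f x = f y.
Proof.
move=> Pf.
have Pfx x : \sum_y P x y * f y = f x by rewrite -{2}Pf ffunE.
pose w := fun x y => s x * P x y.
have wsym x y : w x y = w y x by rewrite /w db.
pose E := \sum_x \sum_y w x y * (f x * (f x - f y)^*).
have E0 : E = 0.
  apply: big1 => x _.
  transitivity (s x * f x * ((f x)^* * \sum_y P x y - \sum_y P x y * (f y)^*)).
    rewrite mulrBr !mulr_sumr -sumrB; apply: eq_bigr => y _.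
    rewrite /w rmorphB /=; ring.
  have -> : \sum_y P x y * (f y)^* = (f x)^*.
    rewrite -(Pfx x) rmorph_sum; apply: eq_bigr => y _.
    by rewrite rmorphM /= (P_real x y).
  by rewrite Psum1 mulr1 subrr mulr0.
pose D := \sum_x \sum_y w x y * ((f x - f y) * (f x - f y)^*).
have D0 : D = 0.
  transitivity (E + E); last by rewrite E0 addr0.
  rewrite {2}/E exchange_big /= /D /E -big_split /=; apply: eq_bigr => x _.
  rewrite -big_split /=; apply: eq_bigr => y _.
  rewrite (wsym y x) !rmorphB /=; ring.
have T0 x y : w x y * ((f x - f y) * (f x - f y)^*) = 0.
  have ge0 x' y' : 0 <= w x' y' * ((f x' - f y') * (f x' - f y')^*).
    by rewrite mulr_ge0 ?mul_conjC_ge0 ?mulr_ge0 ?P_ge0 // ltW ?s_gt0.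
  move/psumr_eq0P: D0 => H.
  have := H (fun x' _ => sumr_ge0 _ (fun y' _ => ge0 x' y')) x isT.
  move/psumr_eq0P => H2; exact: H2 (fun y' _ => ge0 x y') y isT.
have step x y : 0 < P x y -> f x = f y.
  move=> Pxy; move: (T0 x y); rewrite /w => /eqP.
  rewrite mulf_eq0 mul_conjC_eq0 mulf_eq0 (gt_eqF Pxy) gt_eqF ?s_gt0 //=.
  by rewrite subr_eq0 => /eqP.
have pw k : forall x y, 0 < (P ^+ k) x y -> f x = f y.
  elim: k => [|k IH] x y.
    rewrite expr0 mxE; case: (eqVneq x y) => [-> //|_]; by rewrite ltxx.
  rewrite exprS -mulmxE mxE => H.
  have [z Hz] : exists z, P x z * (P ^+ k) z y != 0.
    case: (pickP (fun z => P x z * (P ^+ k) z y != 0)) => [z Hz|H0].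
      by exists z.
    by move: H; rewrite big1 ?ltxx // => z _; move/negbFE/eqP: (H0 z).
  move: Hz; rewrite mulf_eq0 negb_or => /andP[h1 h2].
  rewrite (step x z) ?(IH z y) // lt_def ?h1 ?h2 ?P_ge0 ?Pk_ge0 //.
move=> x y; case: (Pirr x y) => k Hk; exact: pw k x y Hk.
Qed.

Lemma eig_rv2f w mu : w *m P^T = mu *: w -> eigsp P mu (rv2f w).
Proof.
move=> Hw; apply/ffunP => x; rewrite !ffunE.
move/rowP/(_ x): Hw; rewrite !mxE => <-.
by apply: eq_bigr => y _; rewrite ffunE mxE mulrC.
Qed.

Lemma decomp r (lam : 'I_r.+1 -> C) :
  (forall mu, is_eigenvalue P mu -> exists j, lam j = mu) ->
  forall h : {ffun 'I_m -> C}, exists e : 'I_r.+1 -> {ffun 'I_m -> C},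
    (forall j, eigsp P (lam j) (e j)) /\ h = \sum_j e j.
Proof.
move=> lamP h.
pose sq x := sqrtC (s x).
have sq0 x : sq x != 0 by rewrite sqrtC_eq0 gt_eqF ?s_gt0.
have sqK x : sq x * sq x = s x by rewrite -expr2 sqrtCK.
pose D := diag_mx (\row_x sq x). pose Di := diag_mx (\row_x (sq x)^-1).
have DDi : D *m Di = 1%:M.
  rewrite mulmx_diag; apply/matrixP => i j; rewrite !mxE.
  by case: (eqVneq i j) => // _; rewrite mulfV.
have DiD : Di *m D = 1%:M.
  rewrite mulmx_diag; apply/matrixP => i j; rewrite !mxE.
  by case: (eqVneq i j) => // _; rewrite mulVf.
pose H := D *m P *m Di.
have HE x y : H x y = sq x * P x y / sq y.
  by rewrite /H mul_mx_diag mxE mul_diag_mx !mxE.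
have Hsym : H^T = H.
  apply/matrixP => x y; rewrite mxE !HE.
  apply/(mulIf (sq0 x))/(mulIf (sq0 y)); rewrite !divfK //.
  rewrite [RHS](_ : _ = s x * P x y); last by rewrite -sqK; field; exact: sq0.
  by rewrite -db -sqK; ring.
have Hreal : H \is a realmx.
  apply/mxOverP => x y; rewrite HE; apply: ger0_real.
  by rewrite !mulr_ge0 ?invr_ge0 ?sqrtC_ge0 ?P_ge0 ?(ltW (s_gt0 _)).
have Hsymmx : H \is symmetricmx.
  rewrite is_hermitianmxE expr0 scale1r; apply/eqP.
  suff -> : map_mx idfun H^T = H^T by rewrite Hsym.
  by apply/matrixP => i j; rewrite [LHS]mxE.
have := symmetric_normalmx Hsymmx Hreal => /orthomx_spectralP Hspec.
move: Hspec; set U := spectralmx H; set d := spectral_diag H => Hspec.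
have Uu : U \in unitmx by exact: spectral_unit.
pose V := U *m Di.
have Vu : V \in unitmx.
  by rewrite unitmx_mul Uu; case: (mulmx1_unit DiD).
have PT : P^T = D *m H *m Di.
  have Pdef : P = Di *m H *m D.
    by rewrite /H !mulmxA DiD mul1mx -mulmxA DiD mulmx1.
  transitivity ((Di *m H *m D)^T); first by rewrite -Pdef.
  have trD : D^T = D by exact: tr_diag_mx.
  have trDi : Di^T = Di by exact: tr_diag_mx.
  by rewrite [(Di *m H *m D)^T]trmx_mul [(Di *m H)^T]trmx_mul Hsym trD trDi mulmxA.
have VP : V *m P^T = diag_mx d *m V.
  rewrite /V PT {1}Hspec !mulmxA -(mulmxA U Di D) DiD mulmx1.
  by rewrite mulmxV // mul1mx.
have rowV k : row k V *m P^T = d 0 k *: row k V.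
  rewrite -row_mul VP mul_diag_mx; apply/rowP => x; rewrite !mxE //.
have rowV0 k : row k V != 0.
  apply/eqP => H0.
  have : (row k (V *m invmx V)) 0 k = 1 by rewrite mulmxV // !mxE eqxx.
  by rewrite row_mul H0 mul0mx mxE => /eqP; rewrite eq_sym oner_eq0.
have eigk k : is_eigenvalue P (d 0 k).
  exists (rv2f (row k V)); split; last exact: eig_rv2f.
  apply: contra (rowV0 k) => /eqP H0; apply/eqP/rowP => x.
  by move/ffunP/(_ x): H0; rewrite !ffunE !mxE.
pose p k := odflt ord0 [pick j | lam j == d 0 k].
have pk k : lam (p k) = d 0 k.
  rewrite /p; case: pickP => [j /eqP //|H0].
  by have [j Hj] := lamP _ (eigk k); move: (H0 j); rewrite Hj eqxx.
pose c := (\row_x h x) *m invmx V.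
exists (fun j => \sum_(k | p k == j) rv2f (c 0 k *: row k V)); split.
  move=> j; apply: eigsp_sum => k /eqP <-; apply: eig_rv2f.
  by rewrite -scalemxAl rowV pk scalerA mulrC -scalerA.
transitivity (\sum_k rv2f (c 0 k *: row k V)).
  rewrite -rv2f_sum -mulmx_sum_row mulmxKV //.
  by apply/ffunP => x; rewrite !ffunE mxE.
by rewrite (partition_big p xpredT).
Qed.

End Factor.


Lemma sum_prod (C : numClosedFieldType) n (m : 'I_n -> nat)
   (F : forall i, 'I_(m i) -> C) :
  \sum_(x : prodT m) \prod_i F i (x i) = \prod_i \sum_(z : 'I_(m i)) F i z.
Proof.
pose T_ := fun i : 'I_n => 'I_(m i).
rewrite (reindex (@dffun_of_fprod _ T_)); last first.
  exact/onW_bij/dffun_of_fprod_bij.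
transitivity (\sum_(t : fprod T_) \prod_(i in 'I_n) [ffun z => F i z] (t i)).
  by apply: eq_bigr => t _; apply: eq_bigr => i _; rewrite !ffunE.
rewrite big_fprod.
rewrite -(@bigA_distr_big_dep _ _ _ _ _ _ _ (tagged_with T_) (fun i j => untag 0 ([ffun z => F i z]) j)).
apply: eq_bigr => i _.
have := big_tag (op := GRing.Algebra_add__canonical__Monoid_AddLaw C) (fun i (z : T_ i) => [ffun z => F i z] z) i.
move=> <-; apply: eq_bigr => z _; by rewrite ffunE.
Qed.

Lemma big_split_neq (R : Type) (idx : R) (op : Monoid.com_law idx) n
   (i : 'I_n) (F : 'I_n -> R) :
  \big[op/idx]_(j | j != i) F j =
  op (\big[op/idx]_(j : 'I_n | (j < i)%N) F j) (\big[op/idx]_(j : 'I_n | (i < j)%N) F j).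
Proof.
rewrite (bigID (fun j : 'I_n => (j < i)%N)) /=; congr (op _ _); apply: eq_bigl => j.
  by rewrite -val_eqE /=; case: ltngtP.
by rewrite -val_eqE /=; case: ltngtP.
Qed.

Section Prod.
Variables (C : numClosedFieldType) (n : nat) (m : 'I_n -> nat).
Implicit Types (g : forall i : 'I_n, {ffun 'I_(m i) -> C}) (inC : pred 'I_n)
  (P : forall i : 'I_n, 'M[C]_(m i)) (f : {ffun prodT m -> C}).

Definition delta1 (k : nat) (z : 'I_k) : {ffun 'I_k -> C} := [ffun w => (w == z)%:R].

Lemma sum_delta k (z : 'I_k) (h : 'I_k -> C) :
  \sum_w (z == w)%:R * h w = h z.
Proof.
rewrite (bigD1 z) //= eqxx mul1r big1 ?addr0 // => w /negbTE.
by rewrite eq_sym => ->; rewrite mul0r.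
Qed.

Lemma sum_deltaC k (z : 'I_k) (h : 'I_k -> C) :
  \sum_w (w == z)%:R * h w = h z.
Proof. by under eq_bigr do rewrite eq_sym; exact: sum_delta. Qed.

Lemma crested_actD inC (p0 : 'I_n -> C) P f f' :
  crested_act inC p0 P (f + f') = crested_act inC p0 P f + crested_act inC p0 P f'.
Proof.
apply/ffunP => x; rewrite !ffunE -big_split /=; apply: eq_bigr => y _.
by rewrite ffunE mulrDr.
Qed.

Lemma crested_act0 inC (p0 : 'I_n -> C) P : crested_act inC p0 P (0 : {ffun prodT m -> C}) = 0.
Proof.
apply/ffunP => x; rewrite !ffunE big1 // => y _; by rewrite ffunE mulr0.
Qed.

Lemma crested_act_sum inC (p0 : 'I_n -> C) P (I : finType) (Q : pred I) F :
  crested_act inC p0 P (\sum_(l | Q l) F l) = \sum_(l | Q l) crested_act inC p0 P (F l).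
Proof. exact: (big_morph _ (@crested_actD inC p0 P) (@crested_act0 inC p0 P)). Qed.

Lemma fscale_sum (T : finType) mu (I : finType) (Q : pred I) (F : I -> {ffun T -> C}) :
  fscale mu (\sum_(l | Q l) F l) = \sum_(l | Q l) fscale mu (F l).
Proof.
apply/ffunP => x; rewrite ffunE !sum_ffunE mulr_sumr; apply: eq_bigr => l _.
by rewrite ffunE.
Qed.

Definition avg k (h : {ffun 'I_k -> C}) := (\sum_z h z) / k%:R.

Definition termf inC (p0 : 'I_n -> C) (P : forall i, 'M[C]_(m i)) g i (x : prodT m) :=
  if inC i then p0 i * mx_act (P i) (g i) (x i) * \prod_(j | j != i) g j (x j)
  else p0 i * mx_act (P i) (g i) (x i) * \prod_(j : 'I_n | (j < i)%N) g j (x j)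
       * \prod_(j : 'I_n | (i < j)%N) avg (g j).

Lemma act_tensor inC (p0 : 'I_n -> C) P g x :
  crested_act inC p0 P (tensor g) x = \sum_i termf inC p0 P g i x.
Proof.
rewrite ffunE /crested.
under eq_bigr do rewrite mulrDl !mulr_suml.
rewrite big_split /= [RHS](bigID inC) /=.
congr (_ + _); rewrite exchange_big; apply: eq_bigr => i Ci; rewrite /termf.
- rewrite Ci.
  pose H := dfwith (fun j (z : 'I_(m j)) => ((x j == z)%:R : C) * g j z) (i := i)
              (fun z => P i (x i) z * g i z).
  have Hout (y : prodT m) : \prod_(j | j != i) H j (y j) =
      \prod_(j | j != i) (((x j == y j)%:R : C) * g j (y j)).
    by apply: eq_bigr => j ji; rewrite /H dfwith_out // eq_sym.
  have Hin z : H i z = P i (x i) z * g i z by rewrite /H dfwith_in.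
  transitivity (p0 i * \sum_(y : prodT m) \prod_j H j (y j)).
    rewrite mulr_sumr; apply: eq_bigr => y _.
    rewrite ffunE [in RHS](bigD1 i) //= Hin Hout [X in _ * X = _](bigD1 i) //= big_split /=; ring.
  rewrite sum_prod (bigD1 i) //=.
  have -> : \prod_(j | j != i) \sum_z H j z = \prod_(j | j != i) g j (x j).
    apply: eq_bigr => j ji; under eq_bigr do rewrite /H dfwith_out 1?eq_sym //.
    exact: sum_deltaC.
  under eq_bigr do rewrite Hin.
  by rewrite ffunE; ring.
- rewrite (negbTE Ci).
  pose K := fun j (z : 'I_(m j)) =>
     if (j < i)%N then ((x j == z)%:R : C) * g j z
     else if (i < j)%N then g j z / (m j)%:R else 0.
  pose H := dfwith K (i := i) (fun z => P i (x i) z * g i z).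
  have Hout (y : prodT m) : \prod_(j | j != i) H j (y j) = \prod_(j | j != i) K j (y j).
    by apply: eq_bigr => j ji; rewrite /H dfwith_out // eq_sym.
  have Hin z : H i z = P i (x i) z * g i z by rewrite /H dfwith_in.
  transitivity (p0 i * \sum_(y : prodT m) \prod_j H j (y j)).
    rewrite mulr_sumr; apply: eq_bigr => y _.
    rewrite ffunE [in RHS](bigD1 i) //= Hin Hout [X in _ * X = _](bigD1 i) //= !big_split_neq /=.
    rewrite [X in _ = _ * (_ * (X * _))](_ : _ = \prod_(j : 'I_n | (j < i)%N)
                 (((x j == y j)%:R : C) * g j (y j))); last first.
      by apply: eq_bigr => j ji; rewrite /K ji.
    rewrite [X in _ = _ * (_ * (_ * X))](_ : _ = \prod_(j : 'I_n | (i < j)%N)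
                 (g j (y j) / (m j)%:R)); last first.
      by apply: eq_bigr => j ji; rewrite /K ji ltnNge ltnW.
    rewrite !big_split /= prodfV; ring.
  rewrite sum_prod (bigD1 i) //= big_split_neq /=.
  under eq_bigr do rewrite Hin.
  have -> : \prod_(j : 'I_n | (j < i)%N) \sum_z H j z = \prod_(j : 'I_n | (j < i)%N) g j (x j).
    apply: eq_bigr => j ji.
    have ij : i != j by rewrite -val_eqE /= gtn_eqF.
    rewrite (eq_bigr (K j)); last by move=> z _; rewrite /H dfwith_out.
    under eq_bigr do rewrite /K ji.
    exact: sum_delta.
  have -> : \prod_(j : 'I_n | (i < j)%N) \sum_z H j z = \prod_(j : 'I_n | (i < j)%N) avg (g j).
    apply: eq_bigr => j ji.
    have ij : i != j by rewrite -val_eqE /= ltn_eqF.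
    rewrite (eq_bigr (K j)); last by move=> z _; rewrite /H dfwith_out.
    have jni : (j < i)%N = false by rewrite ltnNge ltnW.
    under eq_bigr do rewrite /K ji jni.
    by rewrite /avg mulr_suml.
  by rewrite ffunE; ring.
Qed.
End Prod.


Lemma dchoice (A : Type) (B : A -> Type) (R : forall a, B a -> Prop) :
  (forall a, exists b, R a b) -> exists f : (forall a, B a), forall a, R a (f a).
Proof.
move=> H; exists (fun a => proj1_sig (constructive_indefinite_description _ (H a))).
by move=> a; exact: proj2_sig (constructive_indefinite_description _ (H a)).
Qed.

Section Main.
Unset Implicit Arguments.
Variables (C : numClosedFieldType) (n : nat) (m : 'I_n -> nat)
    (P : forall i : 'I_n, 'M[C]_(m i)) (sigma : forall i : 'I_n, 'I_(m i) -> C)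
    (inC : pred 'I_n) (i1 : 'I_n) (p0 : 'I_n -> C)
    (r : 'I_n -> nat) (lam : forall i : 'I_n, 'I_(r i).+1 -> C).
Hypotheses (Hst : forall i : 'I_n, stochastic (P i)) (Hirr : forall i : 'I_n, irreducible (P i))
  (Hsp : forall i : 'I_n, strictly_positive_prob (sigma i))
  (Hdb : forall i : 'I_n, detailed_balance (P i) (sigma i))
  (Hi1 : ~~ inC i1) (Hmin : forall i : 'I_n, ~~ inC i -> (i1 <= i)%N)
  (Hp0 : forall i : 'I_n, 0 < p0 i) (Hsum : \sum_i p0 i = 1)
  (Hsym : forall k : 'I_n, (i1 < k)%N -> (P k)^T = P k)
  (Hinj : forall i : 'I_n, injective (lam i)) (Hl0 : forall i : 'I_n, lam i ord0 = 1)
  (Heig : forall (i : 'I_n) mu, is_eigenvalue (P i) mu <-> exists j, lam i j = mu).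

Set Implicit Arguments.
Implicit Types (g : forall i : 'I_n, {ffun 'I_(m i) -> C}).

Lemma m_gt0 i : (0 < m i)%N.
Proof.
case: (Hsp i) => _ S; rewrite lt0n; apply/eqP => E; move: S.
rewrite big1 => [/eqP|x _]; first by rewrite eq_sym oner_eq0.
by have : (x < 0)%N by rewrite -E ltn_ord.
Qed.

Lemma eig1_const i h : eigsp (P i) 1 h -> forall z z', h z = h z'.
Proof.
move=> Hh; have E : mx_act (P i) h = h.
  rewrite Hh; apply/ffunP => z; by rewrite ffunE mul1r.
exact: (fix_const (Hst i) (Hirr i) (Hsp i) (Hdb i) E).
Qed.

Lemma avg_const i h z : eigsp (P i) 1 h -> avg h = h z.
Proof.
move=> Hh; rewrite /avg (eq_bigr (fun _ => h z)); last by move=> w _; apply: eig1_const.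
rewrite sumr_const cardT size_enum_ord -[h z *+ _]mulr_natr mulfK // pnatr_eq0 -lt0n; exact: m_gt0.
Qed.

Lemma avg_zero k (j : 'I_(r k).+1) h : (i1 < k)%N -> j != ord0 ->
  eigsp (P k) (lam k j) h -> avg h = 0.
Proof.
move=> k1 j0 Hh; rewrite /avg (sym_sum0 (Hst k) (Hsym k k1) _ Hh) ?mul0r //.
by rewrite -(Hl0 k) (inj_eq (Hinj k)).
Qed.

Lemma termC_ok g i t x : inC i -> eigsp (P i) t (g i) ->
  termf inC p0 P g i x = p0 i * t * \prod_j g j (x j).
Proof.
move=> Ci Hg; rewrite /termf Ci Hg ffunE [in RHS](bigD1 i) //=; ring.
Qed.

Lemma termN_ok g i t x : ~~ inC i -> eigsp (P i) t (g i) ->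
  (forall j : 'I_n, (i < j)%N -> eigsp (P j) 1 (g j)) ->
  termf inC p0 P g i x = p0 i * t * \prod_j g j (x j).
Proof.
move=> Ci Hg Hj; rewrite /termf (negbTE Ci) Hg ffunE [in RHS](bigD1 i) //=.
rewrite big_split_neq /=.
rewrite (eq_bigr (fun j => g j (x j)) (P := fun j : 'I_n => (i < j)%N)); last first.
  by move=> j ij; apply: avg_const; apply: Hj.
ring.
Qed.

Lemma termN_zero g i (k : 'I_n) x : ~~ inC i -> (i < k)%N -> avg (g k) = 0 ->
  termf inC p0 P g i x = 0.
Proof.
move=> Ci ik H0; rewrite /termf (negbTE Ci) (bigD1 k (P := fun j : 'I_n => (i < j)%N)) //=.
by rewrite H0 !mul0r mulr0.
Qed.

Lemma eig_tensor g (t : 'I_n -> C) :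
  (forall i x, termf inC p0 P g i x = p0 i * t i * \prod_j g j (x j)) ->
  crested_act inC p0 P (tensor g) = fscale (\sum_i p0 i * t i) (tensor g).
Proof.
move=> H; apply/ffunP => x; rewrite act_tensor !ffunE mulr_suml.
by apply: eq_bigr => i _; rewrite H.
Qed.

Lemma ord_neq_lt (i k : 'I_n) : (i < k)%N -> (i == k) = false.
Proof. by move=> ik; rewrite -val_eqE /= ltn_eqF. Qed.

Lemma ord_neq_gt (i k : 'I_n) : (k < i)%N -> (i == k) = false.
Proof. by move=> ik; rewrite -val_eqE /= gtn_eqF. Qed.

Lemma tensorA k (j : choiceT r) g : goodA inC i1 k j ->
  (forall i, WA P lam inC k j (g i)) ->
  crested_act inC p0 P (tensor g) = fscale (muA lam inC p0 k j) (tensor g).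
Proof.
move=> /and3P[k1 jk0 _] Hg.
pose t := fun i : 'I_n => if (i < k)%N then (if inC i then lam i (j i) else 0)
                         else if i == k then lam i (j i) else 1.
have -> : muA lam inC p0 k j = \sum_i p0 i * t i.
  rewrite /muA [RHS](bigD1 k) //= big_split_neq /=.
  have -> : t k = lam k (j k) by rewrite /t ltnn eqxx.
  have -> : \sum_(i : 'I_n | (i < k)%N) p0 i * t i =
            \sum_(i : 'I_n | inC i && (i < k)%N) p0 i * lam i (j i).
    rewrite big_mkcond [RHS]big_mkcond; apply: eq_bigr => i _ /=.
    by rewrite /t; case: (i < k)%N; case: (inC i); rewrite ?mulr0.
  have -> : \sum_(i : 'I_n | (k < i)%N) p0 i * t i = \sum_(i : 'I_n | (k < i)%N) p0 i.
    apply: eq_bigr => i ki; rewrite /t ltnNge ltnW //= ord_neq_gt //.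
    by rewrite mulr1.
  by rewrite addrCA addrA.
have gk : eigsp (P k) (lam k (j k)) (g k).
  by have := Hg k; rewrite /WA ltnn eqxx.
have avgk : avg (g k) = 0 := avg_zero k1 jk0 gk.
have gbig (i : 'I_n) : (k < i)%N -> eigsp (P i) 1 (g i).
  move=> ki; have := Hg i; rewrite /WA ltnNge ltnW //= ord_neq_gt //.
  by rewrite /Vsp Hl0.
apply: eig_tensor => i x.
case: (ltngtP i k) => [ik | ki | ik].
- have ti : t i = if inC i then lam i (j i) else 0 by rewrite /t ik.
  case Ci: (inC i).
    apply: termC_ok => //; rewrite ti Ci.
    by have := Hg i; rewrite /WA ik Ci.
  by rewrite (termN_zero _ (negbT Ci) ik avgk) ti Ci mulr0 mul0r.
- have ti : t i = 1 by rewrite /t ltnNge ltnW //= ord_neq_gt.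
  rewrite ti; case Ci: (inC i).
    by apply: termC_ok => //; apply: gbig.
  apply: termN_ok => //; [by rewrite Ci | exact: gbig |].
  move=> j' ij'; apply: gbig; exact: ltn_trans ki ij'.
- have ik' : i = k by apply: val_inj.
  subst i.
  have ti : t k = lam k (j k) by rewrite /t ltnn eqxx.
  rewrite ti; case Ci: (inC k).
    exact: termC_ok.
  by apply: termN_ok => //; rewrite Ci.
Qed.

Lemma partA k (j : choiceT r) : goodA inC i1 k j ->
  forall f, tensp (WA P lam inC k j) f ->
    crested_act inC p0 P f = fscale (muA lam inC p0 k j) f.
Proof.
move=> gA f [K [g [Hg ->]]]; rewrite crested_act_sum fscale_sum.
by apply: eq_bigr => l _; apply: tensorA => // i; apply: Hg.
Qed.

Lemma tensorB (j : choiceT r) g :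
  (forall i, WB P lam i1 j (g i)) ->
  crested_act inC p0 P (tensor g) = fscale (muB lam i1 p0 j) (tensor g).
Proof.
move=> Hg.
pose t := fun i : 'I_n => if (i <= i1)%N then lam i (j i) else 1.
have -> : muB lam i1 p0 j = \sum_i p0 i * t i.
  rewrite /muB [RHS](bigID (fun i : 'I_n => (i <= i1)%N)) /=; congr (_ + _).
    by apply: eq_bigr => i ii; rewrite /t ii.
  rewrite [LHS](eq_bigl (fun i : 'I_n => ~~ (i <= i1)%N)); last by move=> i; rewrite ltnNge.
  by apply: eq_bigr => i ii; rewrite /t (negbTE ii) mulr1.
have gi i : eigsp (P i) (t i) (g i).
  have := Hg i; rewrite /WB /t; case: (i <= i1)%N => //.
  by rewrite /Vsp Hl0.
apply: eig_tensor => i x.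
case Ci: (inC i); first exact: termC_ok.
apply: termN_ok => //; first by rewrite Ci.
move=> j' ij'; have := Hg j'; rewrite /WB.
have -> : (j' <= i1)%N = false.
  by apply: negbTE; rewrite -ltnNge; exact: leq_ltn_trans (Hmin i (negbT Ci)) ij'.
by rewrite /Vsp Hl0.
Qed.

Lemma partB (j : choiceT r) : goodB i1 j ->
  forall f, tensp (WB P lam i1 j) f ->
    crested_act inC p0 P f = fscale (muB lam i1 p0 j) f.
Proof.
move=> _ f [K [g [Hg ->]]]; rewrite crested_act_sum fscale_sum.
by apply: eq_bigr => l _; apply: tensorB => // i; apply: Hg.
Qed.

Lemma tensp0 (W : forall i : 'I_n, {ffun 'I_(m i) -> C} -> Prop) : tensp W 0.
Proof.
exists 0%N, (fun _ _ => 0); split; first by case.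
by rewrite big_ord0.
Qed.

Lemma tensp_add (W : forall i : 'I_n, {ffun 'I_(m i) -> C} -> Prop) f f' :
  tensp W f -> tensp W f' -> tensp W (f + f').
Proof.
move=> [k1 [g1 [H1 ->]]] [k2 [g2 [H2 ->]]].
exists (k1 + k2)%N, (fun l => match split l with inl a => g1 a | inr b => g2 b end).
split.
  by move=> l i; case: (split l) => [a|b]; [apply: H1 | apply: H2].
rewrite big_split_ord /=; congr (_ + _); apply: eq_bigr => l _.
  by have -> : split (lshift k2 l) = inl l := unsplitK (inl l).
by have -> : split (rshift k1 l) = inr l := unsplitK (inr l).
Qed.

Lemma tensp_sum (W : forall i : 'I_n, {ffun 'I_(m i) -> C} -> Prop) (I : finType)
   (Q : pred I) (F : I -> {ffun prodT m -> C}) :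
  (forall a, Q a -> tensp W (F a)) -> tensp W (\sum_(a | Q a) F a).
Proof.
move=> H; apply: (big_ind (tensp W)) => //; [exact: tensp0 | exact: tensp_add].
Qed.

Lemma tensp_tensor (W : forall i : 'I_n, {ffun 'I_(m i) -> C} -> Prop) g :
  (forall i, W i (g i)) -> tensp W (tensor g).
Proof. by move=> H; exists 1%N, (fun _ => g); split; rewrite ?big_ord1. Qed.

Lemma tensp_scale (W : forall i : 'I_n, {ffun 'I_(m i) -> C} -> Prop) c f :
  (forall i h c', W i h -> W i (fscale c' h)) -> tensp W f -> tensp W (fscale c f).
Proof.
move=> Wsc [k [g [Hg ->]]]; rewrite fscale_sum.
apply: tensp_sum => l _.
pose g' := dfwith (g l) (i := i1) (fscale c (g l i1)).
have -> : fscale c (tensor (g l)) = tensor g'.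
  apply/ffunP => x; rewrite !ffunE [in RHS](bigD1 i1) //= /g' dfwith_in ffunE.
  rewrite (bigD1 i1) //= -mulrA; congr (_ * (_ * _)).
  by apply: eq_bigr => i ii; rewrite dfwith_out // eq_sym.
apply: tensp_tensor => i; rewrite /g'; case: dfwithP => [|j _]; last exact: Hg.
exact: Wsc.
Qed.

Lemma eigsp_scale (mm : nat) (Q : 'M[C]_mm) mu c h :
  eigsp Q mu h -> eigsp Q mu (fscale c h).
Proof.
rewrite /eigsp => Hh; apply/ffunP => x; move/ffunP/(_ x): Hh; rewrite !ffunE => E.
rewrite mulrCA -E mulr_sumr; apply: eq_bigr => y _; rewrite ffunE; ring.
Qed.

Definition ipX (f f' : {ffun prodT m -> C}) :=
  \sum_(x : prodT m) (\prod_i sigma i (x i)) * f x * (f' x)^*.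

Lemma ipX_suml (I : finType) (Q : pred I) F f' :
  ipX (\sum_(a | Q a) F a) f' = \sum_(a | Q a) ipX (F a) f'.
Proof.
rewrite /ipX exchange_big /=; apply: eq_bigr => x _.
rewrite sum_ffunE mulr_sumr mulr_suml; apply: eq_bigr => a _; ring.
Qed.

Lemma ipX_sumr (I : finType) (Q : pred I) F f :
  ipX f (\sum_(a | Q a) F a) = \sum_(a | Q a) ipX f (F a).
Proof.
rewrite /ipX exchange_big /=; apply: eq_bigr => x _.
rewrite sum_ffunE rmorph_sum mulr_sumr; apply: eq_bigr => a _; ring.
Qed.

Lemma ipX_tensor g h :
  ipX (tensor g) (tensor h) = \prod_i ip (sigma i) (g i) (h i).
Proof.
rewrite /ipX.
transitivity (\sum_(x : prodT m) \prod_i (sigma i (x i) * g i (x i) * (h i (x i))^*)).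
  apply: eq_bigr => x _; rewrite !ffunE rmorph_prod -!big_split //.
rewrite (sum_prod (fun i z => sigma i z * g i z * (h i z)^*)); apply: eq_bigr => i _; by [].
Qed.

Lemma ipX_eq0 f : ipX f f = 0 -> f = 0.
Proof.
move=> /psumr_eq0P H; apply/ffunP => x; rewrite ffunE.
have pos (y : prodT m) : 0 < \prod_i sigma i (y i).
  by apply: prodr_gt0 => i _; case: (Hsp i).
have H0 : forall y : prodT m, true -> 0 <= (\prod_i sigma i (y i)) * f y * (f y)^*.
  move=> y _; rewrite -mulrA mulr_ge0 ?mul_conjC_ge0 //; exact: ltW (pos y).
have := H H0 x isT; rewrite -mulrA => /eqP; rewrite mulf_eq0 mul_conjC_eq0.
by rewrite gt_eqF ?pos //= => /eqP.
Qed.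

Definition Vsp' (i : 'I_n) (j : 'I_(r i).+1) := Vsp P lam j.

Lemma tensp_orth (W W' : forall i : 'I_n, {ffun 'I_(m i) -> C} -> Prop)
   (i : 'I_n) (ja jb : 'I_(r i).+1) f f' : ja != jb ->
  (forall h, W i h -> Vsp P lam ja h) -> (forall h, W' i h -> Vsp P lam jb h) ->
  tensp W f -> tensp W' f' -> ipX f f' = 0.
Proof.
move=> jab HW HW' [k [g [Hg ->]]] [k' [g' [Hg' ->]]].
rewrite ipX_suml; apply: big1 => l _; rewrite ipX_sumr; apply: big1 => l' _.
rewrite ipX_tensor (bigD1 i) //=.
rewrite (eig_orth (Hst i) (Hsp i) (Hdb i) _ _ (HW _ (Hg l i)) (HW' _ (Hg' l' i))).
- by rewrite mul0r.
- by apply/Heig; exists jb.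
- by rewrite (inj_eq (Hinj i)).
Qed.

Definition Wof (a : ('I_n * choiceT r) + choiceT r) :
    forall i : 'I_n, {ffun 'I_(m i) -> C} -> Prop :=
  match a with inl kj => WA P lam inC kj.1 kj.2 | inr j => WB P lam i1 j end.

Lemma spAB_Wof a : spAB P lam inC i1 a = tensp (Wof a).
Proof. by case: a => [[k j]|j]. Qed.

Definition sep (W W' : forall i : 'I_n, {ffun 'I_(m i) -> C} -> Prop) :=
  exists (i : 'I_n) (ja jb : 'I_(r i).+1), ja != jb /\
    (forall h, W i h -> Vsp P lam ja h) /\ (forall h, W' i h -> Vsp P lam jb h).

Lemma sep_sym W W' : sep W W' -> sep W' W.
Proof.
by move=> [i [ja [jb [jab [H1 H2]]]]]; exists i, jb, ja; split; rewrite 1?eq_sym.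
Qed.

Lemma WA_at (k : 'I_n) (j : choiceT r) (i : 'I_n) : (inC i && (i < k)%N) || (i == k) ->
  WA P lam inC k j (i := i) = Vsp P lam (j i).
Proof.
rewrite /WA; case/orP => [/andP[Ci ik]|/eqP->]; first by rewrite ik Ci.
by rewrite ltnn eqxx.
Qed.

Lemma WA_gt (k : 'I_n) (j : choiceT r) (i : 'I_n) : (k < i)%N ->
  WA P lam inC k j (i := i) = Vsp P lam (ord0 : 'I_(r i).+1).
Proof. by move=> ki; rewrite /WA ltnNge ltnW //= ord_neq_gt. Qed.

Lemma WB_le (j : choiceT r) (i : 'I_n) : (i <= i1)%N ->
  WB P lam i1 j (i := i) = Vsp P lam (j i).
Proof. by move=> ii; rewrite /WB ii. Qed.

Lemma WB_gt (j : choiceT r) (i : 'I_n) : (i1 < i)%N ->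
  WB P lam i1 j (i := i) = Vsp P lam (ord0 : 'I_(r i).+1).
Proof. by move=> ii; rewrite /WB leqNgt ii. Qed.

Lemma ffun_neq (J J' : choiceT r) : J != J' -> exists i, J i != J' i.
Proof.
move=> JJ; case: (pickP (fun i => J i != J' i)) => [i Hi|H0]; first by exists i.
have E : J = J'.
  apply/ffunP => i; by move/negbFE/eqP: (H0 i).
by rewrite E eqxx in JJ.
Qed.

Lemma sepAA_lt (k : 'I_n) (j : choiceT r) (k' : 'I_n) (j' : choiceT r) : (k < k')%N ->
  goodA inC i1 k' j' -> sep (WA P lam inC k j) (WA P lam inC k' j').
Proof.
move=> kk /and3P[_ jk0 _]; exists k', ord0, (j' k'); split; first by rewrite eq_sym.
by rewrite WA_gt // WA_at ?eqxx ?orbT.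
Qed.

Lemma sepAA (k : 'I_n) (j : choiceT r) (k' : 'I_n) (j' : choiceT r) : goodA inC i1 k j ->
  goodA inC i1 k' j' -> (k, j) != (k', j') ->
  sep (WA P lam inC k j) (WA P lam inC k' j').
Proof.
move=> gA gA'; case: (ltngtP k k') => [kk|kk|kk].
- by move=> _; apply: sepAA_lt.
- by move=> _; apply: sep_sym; apply: sepAA_lt.
- have kk' : k = k' by apply: val_inj.
  subst k'; rewrite xpair_eqE eqxx /= => /ffun_neq[i Hi].
  have cond : (inC i && (i < k)%N) || (i == k).
    case/and3P: gA => _ _ /forallP/(_ i) H1; case/and3P: gA' => _ _ /forallP/(_ i) H2.
    case: (eqVneq (j i) ord0) => [E|E]; last exact: (implyP H1).
    by move: Hi; rewrite E eq_sym => Hi; exact: (implyP H2).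
  by exists i, (j i), (j' i); split => //; rewrite !WA_at.
Qed.

Lemma sepAB (k : 'I_n) (j : choiceT r) (j' : choiceT r) : goodA inC i1 k j ->
  sep (WA P lam inC k j) (WB P lam i1 j').
Proof.
move=> /and3P[k1 jk0 _]; exists k, (j k), ord0; split => //.
by rewrite WB_gt // WA_at ?eqxx ?orbT.
Qed.

Lemma sepBB (j j' : choiceT r) : goodB i1 j -> goodB i1 j' -> j != j' ->
  sep (WB P lam i1 j) (WB P lam i1 j').
Proof.
move=> /forallP gB /forallP gB' /ffun_neq[i Hi].
have cond : (i <= i1)%N.
  case: (eqVneq (j i) ord0) => [E|E]; last exact: (implyP (gB i)).
  by move: Hi; rewrite E eq_sym => Hi; exact: (implyP (gB' i)).
by exists i, (j i), (j' i); split => //; rewrite !WB_le.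
Qed.

Lemma sep_good a b : goodAB inC i1 a -> goodAB inC i1 b -> a != b ->
  sep (Wof a) (Wof b).
Proof.
case: a => [[k j]|j]; case: b => [[k' j']|j'] /= ga gb ab.
- exact: sepAA.
- exact: sepAB.
- exact/sep_sym/sepAB.
- exact: sepBB.
Qed.

Lemma uniq_part (g : ('I_n * choiceT r) + choiceT r -> {ffun prodT m -> C}) :
  (forall a, goodAB inC i1 a -> spAB P lam inC i1 a (g a)) ->
  \sum_(a | goodAB inC i1 a) g a = 0 ->
  forall a, goodAB inC i1 a -> g a = 0.
Proof.
move=> Hg Hs b gb; apply: ipX_eq0.
have : ipX (\sum_(a | goodAB inC i1 a) g a) (g b) = 0.
  by rewrite Hs /ipX big1 // => x _; rewrite ffunE mulr0 mul0r.
rewrite ipX_suml (bigD1 b) //= big1 ?addr0 // => a /andP[ga ab].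
have [i [ja [jb [jab [H1 H2]]]]] := sep_good ga gb ab.
apply: (tensp_orth jab H1 H2); rewrite -spAB_Wof; exact: Hg.
Qed.

Definition zeroN (k : 'I_n) (J : choiceT r) : choiceT r :=
  [ffun i : 'I_n => if ~~ inC i && (i < k)%N then (ord0 : 'I_(r i).+1) else J i].

Definition topk (J : choiceT r) : option 'I_n :=
  [pick k : 'I_n | [&& (i1 < k)%N, J k != ord0 & [forall i : 'I_n, (k < i)%N ==> (J i == ord0)]]].

Definition blk (J : choiceT r) : ('I_n * choiceT r) + choiceT r :=
  match topk J with Some k => inl (k, zeroN k J) | None => inr J end.

Lemma blk_ok (J : choiceT r) : goodAB inC i1 (blk J) /\
  forall (i : 'I_n) (h : {ffun 'I_(m i) -> C}), Vsp P lam (J i) h -> @Wof (blk J) i h.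
Proof.
rewrite /blk /topk; case: pickP => [k /and3P[k1 Jk /forallP Hk] | Hnone].
  split.
    apply/and3P; split => //; first by rewrite ffunE ltnn andbF.
    apply/forallP => i; rewrite ffunE; apply/implyP.
    case Ci: (inC i); case: (ltngtP i k) => //= [ki|ik] Ji;
      by [move: Ji; have /implyP H := Hk i; rewrite (eqP (H ki)) eqxx |
          apply/eqP/val_inj].
  move=> i h Hh /=.
  case: (ltngtP i k) => [ik|ki|ik].
  - rewrite /WA ik ffunE ik andbT; case Ci: (inC i) => //=.
  - rewrite WA_gt //; have /implyP H := Hk i; by rewrite -(eqP (H ki)).
  - have ik' : i = k by apply: val_inj.
    by subst i; rewrite WA_at ?eqxx ?orbT // ffunE ltnn andbF.
have gB : goodB i1 J.
  apply/forallP => i0; apply/implyP => J0; rewrite leqNgt; apply/negP => i01.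
  have P0 : (i1 < i0)%N && (J i0 != ord0) by rewrite i01 J0.
  case: (@arg_maxnP _ i0 (fun k : 'I_n => (i1 < k)%N && (J k != ord0))
                      (fun k : 'I_n => nat_of_ord k) P0) => k /andP[k1 Jk] kmax.
  move: (Hnone k); rewrite k1 Jk /=; move/negbT/negP; apply.
  apply/forallP => i; apply/implyP => ki; apply/negPn/negP => Ji.
  have i1i : (i1 < i)%N := ltn_trans k1 ki.
  have := kmax i; rewrite i1i Ji /= => /(_ isT). by rewrite leqNgt ki.
split => // i h Hh /=.
case: (leqP i i1) => ii; first by rewrite WB_le.
rewrite WB_gt //.
have /forallP/(_ i)/implyP H := gB.
case: (eqVneq (J i) ord0) => [E|E]; first by rewrite -E.
by move: (H E); rewrite leqNgt ii.
Qed.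

Lemma Wof_scale a (i : 'I_n) h c : @Wof a i h -> @Wof a i (fscale c h).
Proof.
case: a => [[k j]|j] /=; rewrite /WA /WB /Vsp;
  repeat (case: ifP => _); try done; exact: eigsp_scale.
Qed.

Lemma prod_delta (x y : prodT m) :
  \prod_i (((x i == y i)%:R) : C) = (x == y)%:R.
Proof.
case: (eqVneq x y) => [->|xy]; first by rewrite big1 // => i _; rewrite eqxx.
have [i Hi] : exists i, x i != y i.
  case: (pickP (fun i => x i != y i)) => [i Hi|H0]; first by exists i.
  have E : x = y by apply/ffunP => i; move/negbFE/eqP: (H0 i).
  by rewrite E eqxx in xy.
by rewrite (bigD1 i) //= (negbTE Hi) mul0r.
Qed.

Lemma tensor_sum (G : forall i : 'I_n, 'I_(r i).+1 -> {ffun 'I_(m i) -> C}) :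
  tensor (fun i => \sum_j G i j) = \sum_(J : choiceT r) tensor (fun i => G i (J i)).
Proof.
apply/ffunP => x; rewrite ffunE sum_ffunE.
under eq_bigr do rewrite sum_ffunE.
rewrite -(sum_prod (m := fun i => (r i).+1) (fun i j => G i j (x i))).
by apply: eq_bigr => J _; rewrite ffunE.
Qed.

Lemma exist_part f : exists g : ('I_n * choiceT r) + choiceT r -> {ffun prodT m -> C},
  (forall a, goodAB inC i1 a -> spAB P lam inC i1 a (g a)) /\
  f = \sum_(a | goodAB inC i1 a) g a.
Proof.
have HE : forall i : 'I_n, exists Ei : forall z : 'I_(m i), 'I_(r i).+1 -> {ffun 'I_(m i) -> C},
    forall z, (forall j, eigsp (P i) (lam i j) (Ei z j)) /\ delta1 C z = \sum_j Ei z j.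
  move=> i; apply: (@dchoice 'I_(m i) (fun _ => 'I_(r i).+1 -> {ffun 'I_(m i) -> C}) (fun (z : 'I_(m i)) (e : 'I_(r i).+1 -> {ffun 'I_(m i) -> C}) =>
     (forall j, eigsp (P i) (lam i j) (e j)) /\ delta1 C z = \sum_j e j)) => z.
  by apply: (decomp (Hst i) (Hsp i) (Hdb i)) => mu /Heig.
have [E HE'] := dchoice HE.
pose T (y : prodT m) (J : choiceT r) := tensor (fun i => E i (y i) (J i)).
exists (fun a => \sum_(J | blk J == a) \sum_y fscale (f y) (T y J)); split.
  move=> a _; rewrite spAB_Wof; apply: tensp_sum => J /eqP <-.
  apply: tensp_sum => y _; apply: tensp_scale; first exact: Wof_scale.
  apply: tensp_tensor => i; apply: (proj2 (blk_ok J)).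
  exact: (proj1 (HE' i (y i))).
rewrite [RHS](eq_bigr (fun a => \sum_(J | true && (blk J == a)) \sum_y fscale (f y) (T y J))) //.
rewrite -(partition_big blk (goodAB inC i1)); last by move=> J _; case: (blk_ok J).
rewrite exchange_big /=.
transitivity (\sum_(y : prodT m) fscale (f y) (tensor (fun i => delta1 C (y i)))).
  apply/ffunP => x; rewrite sum_ffunE (bigD1 x) //= big1 => [|y yx].
    by rewrite !ffunE addr0 (eq_bigr (fun _ => 1)) ?big1_eq ?mulr1 // => i _; rewrite ffunE eqxx.
  rewrite !ffunE (eq_bigr (fun i => ((x i == y i)%:R : C))); last by move=> i _; rewrite ffunE.
  by rewrite prod_delta eq_sym (negbTE yx) mulr0.
apply: eq_bigr => y _; rewrite -fscale_sum /T -(tensor_sum (fun i j => E i (y i) j)); congr fscale.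
apply/ffunP => x; rewrite !ffunE; apply: eq_bigr => i _.
by rewrite (proj2 (HE' i (y i))).
Qed.

Lemma main_sec :
  (forall (k : 'I_n) (j : choiceT r), goodA inC i1 k j ->
     forall f, tensp (WA P lam inC k j) f ->
       crested_act inC p0 P f = fscale (muA lam inC p0 k j) f)
  /\ (forall j : choiceT r, goodB i1 j ->
     forall f, tensp (WB P lam i1 j) f ->
       crested_act inC p0 P f = fscale (muB lam i1 p0 j) f)
  /\ dirsum (goodAB inC i1) (spAB P lam inC i1).
Proof.
split; first exact: partA.
split; first exact: partB.
split; first exact: exist_part.
exact: uniq_part.
Qed.

End Main.

Unset Implicit Arguments.
Theorem theorem4p3 (C : numClosedFieldType) (n : nat) (m : 'I_n -> nat)
    (P : forall i : 'I_n, 'M[C]_(m i)) (sigma : forall i : 'I_n, 'I_(m i) -> C)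
    (inC : pred 'I_n) (i1 : 'I_n) (p0 : 'I_n -> C)
    (r : 'I_n -> nat) (lam : forall i : 'I_n, 'I_(r i).+1 -> C) :
  (forall i, stochastic (P i)) ->
  (forall i, irreducible (P i)) ->
  (forall i, strictly_positive_prob (sigma i)) ->
  (forall i, detailed_balance (P i) (sigma i)) ->
  ~~ inC i1 -> (forall i, ~~ inC i -> (i1 <= i)%N) ->
  (forall i, 0 < p0 i) -> \sum_i p0 i = 1 ->
  (forall k : 'I_n, (i1 < k)%N -> (P k)^T = P k) ->
  (forall i, injective (lam i)) ->
  (forall i, lam i ord0 = 1) ->
  (forall i mu, is_eigenvalue (P i) mu <-> exists j, lam i j = mu) ->
  (forall (k : 'I_n) (j : choiceT r), goodA inC i1 k j ->
     forall f, tensp (WA P lam inC k j) f ->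
       crested_act inC p0 P f = fscale (muA lam inC p0 k j) f)
  /\ (forall j : choiceT r, goodB i1 j ->
     forall f, tensp (WB P lam i1 j) f ->
       crested_act inC p0 P f = fscale (muB lam i1 p0 j) f)
  /\ dirsum (goodAB inC i1) (spAB P lam inC i1).
Proof.
move=> Hst Hirr Hsp Hdb Hi1 Hmin Hp0 Hsum Hsym Hinj Hl0 Heig.
by apply: main_sec; eassumption.
Qed.
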